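(* For $i=1,2$ let $(E_i,F_i)$ be a pair of dual spaces over a division ring $\mathbb{K}_i$, and let $g:\mathcal{L}_{F_1}(E_1)\to\mathcal{L}_{F_2}(E_2)$ be a map preserving arbitrary joins and sending atoms to atoms or $0$, such that $g(\mathcal{L}_{F_1}(E_1))$ has length $\ge3$. Then there is a semilinear map $f:E_1\to E_2$ inducing $g$, i.e. $g(\mathbb{K}_1v)=\mathbb{K}_2f(v)$ for all $v\in E_1$.
   Context: A pair of dual spaces $(E,F)$ over a division ring $\mathbb{K}$ consists of a left vector space $E$ and a right vector space $F$ over $\mathbb{K}$ with a non-degenerate bilinear map $\beta:E\times F\to\mathbb{K}$. For $A\subseteq E$, $A^\perp:=\{y\in F;\beta(x,y)=0\ \forall x\in A\}$, similarly for $B\subseteq F$; $\mathcal{L}_F(E):=\{A\subseteq E;A^{\perp\perp}=A\}$ ordered by inclusion (a complete lattice whose atoms are the one-dimensional subspaces). A semilinear map $f:E_1\to E_2$ is an additive map for which there is a homomorphism of division rings $\sigma:\mathbb{K}_1\to\mathbb{K}_2$ with $f(\lambda v)=\sigma(\lambda)f(v)$. $\mathbb{K}_2f(v)$ denotes the subspace spanned by $f(v)$ (zero if $f(v)=0$). *)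

(* Defs.v *)
From mathcomp Require Import all_boot all_algebra.
Set Implicit Arguments. Unset Strict Implicit. Unset Printing Implicit Defensive.
Import GRing.Theory.
Local Open Scope ring_scope.

Definition division_ring (K : unitRingType) : Prop :=
  forall x : K, x != 0 -> x \is a GRing.unit.

Definition subset_of {T : Type} (A B : T -> Prop) : Prop := forall x, A x -> B x.

(* E is a left K-vector space (lmodType K); F is a right K-vector space,
   i.e. a left module over the converse ring K^c: for y : F and a : K,
   (a *: y) denotes the right product y a. *)
Section DualPair.
Variables (K : unitRingType) (E : lmodType K) (F : lmodType K^c).
Variable b : E -> F -> K.

Definition bilinear_form : Prop :=
  [/\ forall x1 x2 y, b (x1 + x2) y = b x1 y + b x2 y,
      forall x y1 y2, b x (y1 + y2) = b x y1 + b x y2,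
      forall (a : K) x y, b (a *: x) y = a * b x y
    & forall (a : K) x (y : F), b x ((a : K^c) *: y) = b x y * a].

Definition nondegenerate : Prop :=
  (forall x, (forall y, b x y = 0) -> x = 0) /\
  (forall y, (forall x, b x y = 0) -> y = 0).

Definition dual_pair : Prop := bilinear_form /\ nondegenerate.

Definition perpE (A : E -> Prop) : F -> Prop := fun y => forall x, A x -> b x y = 0.
Definition perpF (B : F -> Prop) : E -> Prop := fun x => forall y, B y -> b x y = 0.

Definition is_closed (A : E -> Prop) : Prop := perpF (perpE A) = A.
Definition LF := { A : E -> Prop | is_closed A }.

Definition cjoin (S : LF -> Prop) : E -> Prop :=
  perpF (perpE (fun x => exists2 A : LF, S A & proj1_sig A x)).

Definition zero_set : E -> Prop := fun x => x = 0.

Definition atom (A : LF) : Prop :=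
  proj1_sig A <> zero_set /\
  forall B : LF, subset_of (proj1_sig B) (proj1_sig A) ->
    proj1_sig B = zero_set \/ proj1_sig B = proj1_sig A.

End DualPair.

Definition line (K : unitRingType) (E : lmodType K) (v : E) : E -> Prop :=
  fun x => exists a : K, x = a *: v.

Definition preserves_joins (K1 K2 : unitRingType)
  (E1 : lmodType K1) (F1 : lmodType K1^c) (b1 : E1 -> F1 -> K1)
  (E2 : lmodType K2) (F2 : lmodType K2^c) (b2 : E2 -> F2 -> K2)
  (g : LF b1 -> LF b2) : Prop :=
  forall (S : LF b1 -> Prop) (A : LF b1),
    proj1_sig A = cjoin S ->
    proj1_sig (g A) = cjoin (fun B => exists2 A', S A' & B = g A').

(* the image of g (as a subposet of L_F2(E2)) has length >= 3:
   it contains a chain of 4 distinct elements *)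
Definition image_length_ge3 (K1 K2 : unitRingType)
  (E1 : lmodType K1) (F1 : lmodType K1^c) (b1 : E1 -> F1 -> K1)
  (E2 : lmodType K2) (F2 : lmodType K2^c) (b2 : E2 -> F2 -> K2)
  (g : LF b1 -> LF b2) : Prop :=
  exists A0 A1 A2 A3 : LF b1,
    let s i := proj1_sig (g i) in
    [/\ subset_of (s A0) (s A1) /\ s A0 <> s A1,
        subset_of (s A1) (s A2) /\ s A1 <> s A2
      & subset_of (s A2) (s A3) /\ s A2 <> s A3].

Definition semilinear_map (K1 K2 : unitRingType) (E1 : lmodType K1) (E2 : lmodType K2)
  (f : E1 -> E2) : Prop :=
  (forall x y, f (x + y) = f x + f y) /\
  exists sigma : {rmorphism K1 -> K2}, forall (a : K1) v, f (a *: v) = sigma a *: f v.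

(* Main.v *)
From HB Require Import structures.
Require Import Defs.
From mathcomp Require Import all_boot all_algebra.
From Stdlib Require Import Classical ClassicalEpsilon FunctionalExtensionality PropExtensionality.
Set Implicit Arguments. Unset Strict Implicit. Unset Printing Implicit Defensive.
Local Open Scope ring_scope.
Import GRing.Theory.


Definition span2 (K : unitRingType) (E : lmodType K) (a b x : E) : Prop :=
  exists c d : K, x = c *: a + d *: b.
Definition indep2 (K : unitRingType) (E : lmodType K) (a b : E) : Prop :=
  forall c d : K, c *: a + d *: b = 0 -> c = 0 /\ d = 0.
Definition indep3 (K : unitRingType) (E : lmodType K) (a b c : E) : Prop :=
  forall x y z : K, x *: a + y *: b + z *: c = 0 -> [/\ x = 0, y = 0 & z = 0].
Definition sim (K : unitRingType) (E : lmodType K) (a b : E) : Prop :=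
  exists2 l : K, l != 0 & b = l *: a.

Section LA.
Variable K : unitRingType.
Hypothesis hK : division_ring K.

Lemma mulVK (l : K) : l != 0 -> l^-1 * l = 1.
Proof. by move=> /hK; apply: mulVr. Qed.
Lemma mulKV (l : K) : l != 0 -> l * l^-1 = 1.
Proof. by move=> /hK; apply: mulrV. Qed.
Lemma mulf_neq0' (l m : K) : l != 0 -> m != 0 -> l * m != 0.
Proof.
move=> hl hm; apply/eqP=> H; move/eqP: hm; apply.
by rewrite -[m]mul1r -(mulVK hl) -mulrA H mulr0.
Qed.
Lemma mulr_0l (c l : K) : l != 0 -> c * l = 0 -> c = 0.
Proof. by move=> hl H; rewrite -[c]mulr1 -(mulKV hl) mulrA H mul0r. Qed.
Lemma mulr_0r (c l : K) : l != 0 -> l * c = 0 -> c = 0.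
Proof. by move=> hl H; rewrite -[c]mul1r -(mulVK hl) -mulrA H mulr0. Qed.

Variable E : lmodType K.
Implicit Types (a b c x y z v w u : E).

Lemma scale_inj0 (l : K) v : l != 0 -> l *: v = 0 -> v = 0.
Proof. by move=> hl H; rewrite -[v]scale1r -(mulVK hl) -scalerA H scaler0. Qed.
Lemma scale_cancel (l m : K) v : v != 0 -> l *: v = m *: v -> l = m.
Proof.
move=> hv H; apply/eqP; rewrite -subr_eq0; apply/negPn/negP => hlm.
move/eqP: hv; apply; apply: (scale_inj0 hlm); by rewrite scalerBl H subrr.
Qed.

Lemma sim_refl a : sim a a.
Proof. by exists 1; rewrite ?oner_neq0 ?scale1r. Qed.
Lemma sim_sym a b : sim a b -> sim b a.
Proof.
case=> l hl ->; exists l^-1; first exact: invr_neq0.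
by rewrite scalerA mulVK // scale1r.
Qed.
Lemma sim_trans a b c : sim a b -> sim b c -> sim a c.
Proof.
case=> l hl -> [m hm ->]; exists (m * l); first exact: mulf_neq0'.
by rewrite scalerA.
Qed.
Lemma sim_scale (l : K) a : l != 0 -> sim a (l *: a).
Proof. by move=> hl; exists l. Qed.
Lemma sim0 b : sim 0 b -> b = 0.
Proof. by case=> l _ ->; rewrite scaler0. Qed.
Lemma sim0r a : sim a 0 -> a = 0.
Proof. by move/sim_sym/sim0. Qed.
Lemma sim_neq0 a b : sim a b -> a != 0 -> b != 0.
Proof. by move=> /sim_sym hs; apply: contra_neq => H; apply: sim0; rewrite -H. Qed.

Lemma line_refl a : line a a.
Proof. by exists 1; rewrite scale1r. Qed.
Lemma line0 a : line a 0.
Proof. by exists 0; rewrite scale0r. Qed.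
Lemma line_of_sim a b x : sim a b -> line a x -> line b x.
Proof.
case=> l hl -> [c ->]; exists (c * l^-1).
by rewrite scalerA -mulrA mulVK // mulr1.
Qed.
Lemma sim_line a b : sim a b -> line a b.
Proof. by case=> l _ ->; exists l. Qed.
Lemma line_sim_r a b c : line a b -> sim b c -> line a c.
Proof. by case=> k -> [l _ ->]; exists (l * k); rewrite scalerA. Qed.
Lemma line_line_sim a b : line a b -> line b a -> sim a b.
Proof.
case=> c hb [d ha]; have [c0|cn0] := eqVneq c 0.
  have b0 : b = 0 by rewrite hb c0 scale0r.
  have a0 : a = 0 by rewrite ha b0 scaler0.
  by rewrite a0 b0; apply: sim_refl.
by exists c.
Qed.
Lemma line_sim_nz d v : line d v -> v != 0 -> sim v d.
Proof.
case=> k -> hv; have kn0 : k != 0.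
  by apply: contraNneq hv => ->; rewrite scale0r.
by apply: sim_sym; exists k.
Qed.
Lemma sim_eq_line a b : sim a b -> line a = line b.
Proof.
move=> hs; apply: functional_extensionality => x; apply: propositional_extensionality.
by split; apply: line_of_sim => //; apply: sim_sym.
Qed.

Lemma comb2 (c d u1 u2 w1 w2 : K) a b :
  c *: (u1 *: a + u2 *: b) + d *: (w1 *: a + w2 *: b) =
  (c * u1 + d * w1) *: a + (c * u2 + d * w2) *: b.
Proof. by rewrite !scalerDr !scalerA !scalerDl addrACA. Qed.

Lemma span2_l a b : span2 a b a.
Proof. by exists 1, 0; rewrite scale1r scale0r addr0. Qed.
Lemma span2_r a b : span2 a b b.
Proof. by exists 0, 1; rewrite scale1r scale0r add0r. Qed.
Lemma span2_sym a b x : span2 a b x -> span2 b a x.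
Proof. by case=> c [d ->]; exists d, c; rewrite addrC. Qed.
Lemma span2_sub a b u w x : span2 a b u -> span2 a b w -> span2 u w x -> span2 a b x.
Proof.
case=> u1 [u2 ->] [w1 [w2 ->]] [c [d ->]].
by rewrite comb2; eexists; eexists.
Qed.
Lemma span2_comb a b u w (c d : K) : span2 a b u -> span2 a b w -> span2 a b (c *: u + d *: w).
Proof. by move=> hu hw; apply: (span2_sub hu hw); exists c, d. Qed.
Lemma line_span2 a b x : line a x -> span2 a b x.
Proof. by case=> c ->; exists c, 0; rewrite scale0r addr0. Qed.
Lemma span2_line b u w x : line b u -> line b w -> span2 u w x -> line b x.
Proof.
move=> hu hw hx; have [c [d ->]] := span2_sub (line_span2 b hu) (line_span2 b hw) hx.
by exists (c + d); rewrite scalerDl.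
Qed.

Lemma indep2_sym a b : indep2 a b -> indep2 b a.
Proof. by move=> H c d; rewrite addrC => /H [-> ->]. Qed.
Lemma indep2_neq0l a b : indep2 a b -> a != 0.
Proof.
move=> H; apply/eqP=> a0; have := H 1 0; rewrite a0 scaler0 scale0r addr0.
by case=> // /eqP; rewrite oner_eq0.
Qed.
Lemma indep2_neq0r a b : indep2 a b -> b != 0.
Proof. by move/indep2_sym/indep2_neq0l. Qed.
Lemma indep2_coef a b (c d c' d' : K) :
  indep2 a b -> c *: a + d *: b = c' *: a + d' *: b -> c = c' /\ d = d'.
Proof.
move=> H E0; have : (c - c') *: a + (d - d') *: b = 0.
  by rewrite !scalerBl addrACA -opprD E0 subrr.
by case/H => /eqP; rewrite subr_eq0 => /eqP -> /eqP; rewrite subr_eq0 => /eqP ->.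
Qed.
Lemma indep2_notline a b : indep2 a b -> ~ line a b.
Proof.
move=> H [c hb]; have := H c (-1); rewrite scaleN1r hb subrr.
by case=> // _ /eqP; rewrite oppr_eq0 oner_eq0.
Qed.
Lemma notline_indep2 a b : a != 0 -> ~ line a b -> indep2 a b.
Proof.
move=> ha hl c d H; have [d0|dn0] := eqVneq d 0.
  split=> //; move: H; rewrite d0 scale0r addr0 => H.
  apply/eqP/negPn/negP => cn0; move/eqP: ha; apply; exact: (scale_inj0 cn0).
exfalso; apply: hl; exists (- (d^-1 * c)).
have hdb : d *: b = - (c *: a) by apply/eqP; rewrite -addr_eq0 addrC H.
by rewrite -[b]scale1r -(mulVK dn0) -scalerA hdb scalerN scalerA scaleNr.
Qed.
Lemma notindep_line a b : a != 0 -> ~ indep2 a b -> line a b.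
Proof.
move=> ha hn; case: (classic (line a b)) => // hl.
by case: hn; apply: notline_indep2.
Qed.
Lemma indep2_line a b x : indep2 a b -> line a x -> x != 0 -> indep2 x b.
Proof.
move=> H [k ->] hx; have kn0 : k != 0 by apply: contraNneq hx => ->; rewrite scale0r.
move=> c d; rewrite scalerA => /H [/(mulr_0l kn0) -> ->] //.
Qed.
Lemma indep2_sim a b a' b' : sim a a' -> sim b b' -> indep2 a b -> indep2 a' b'.
Proof.
case=> l hl -> [m hm ->] H c d; rewrite !scalerA => /H [].
by move=> /(mulr_0l hl) -> /(mulr_0l hm) ->.
Qed.
Lemma line_inter a b x : indep2 a b -> line a x -> line b x -> x = 0.
Proof.
move=> H [c hx] [d hx']; have : c *: a + (- d) *: b = 0 by rewrite scaleNr -hx -hx' subrr.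
by case/H => c0 _; rewrite hx c0 scale0r.
Qed.
Lemma indep2_self a : ~ indep2 a a.
Proof.
move=> H; have := H 1 (-1); rewrite scaleN1r scale1r subrr.
by case=> // /eqP; rewrite oner_eq0.
Qed.
Lemma indep2_add a b : indep2 a b -> indep2 a (a + b) /\ indep2 b (a + b).
Proof.
move=> H; split=> c d.
  rewrite scalerDr addrA -scalerDl => /H [] hcd hd; split=> //.
  by move: hcd; rewrite hd addr0.
rewrite scalerDr addrCA -scalerDl => /H [] hd hcd; split=> //.
by move: hcd; rewrite hd addr0.
Qed.
Lemma indep2_addl a b : indep2 a b -> indep2 (a + b) b.
Proof.
move=> H c d; rewrite scalerDr -addrA -scalerDl => /H [] -> /eqP.
by rewrite add0r => /eqP ->.
Qed.

Lemma indep3_coef a b c (x y z x' y' z' : K) : indep3 a b c ->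
  x *: a + y *: b + z *: c = x' *: a + y' *: b + z' *: c -> [/\ x = x', y = y' & z = z'].
Proof.
move=> H E0; have : (x - x') *: a + (y - y') *: b + (z - z') *: c = 0.
  by rewrite !scalerBl (addrACA (x *: a)) -opprD (addrACA (x *: a + y *: b)) -opprD E0 subrr.
by case/H => /eqP; rewrite subr_eq0 => /eqP -> /eqP; rewrite subr_eq0 => /eqP ->
   /eqP; rewrite subr_eq0 => /eqP ->.
Qed.
Lemma indep3_12 a b c : indep3 a b c -> indep2 a b.
Proof. by move=> H x y E0; have [] := H x y 0; rewrite ?scale0r ?addr0. Qed.
Lemma indep3_213 a b c : indep3 a b c -> indep3 b a c.
Proof. by move=> H x y z; rewrite [x *: b + _]addrC => /H []. Qed.
Lemma indep3_132 a b c : indep3 a b c -> indep3 a c b.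
Proof. by move=> H x y z; rewrite -addrA [y *: c + _]addrC addrA => /H []. Qed.
Lemma indep3_sim a b c a' b' c' : sim a a' -> sim b b' -> sim c c' ->
  indep3 a b c -> indep3 a' b' c'.
Proof.
case=> l hl -> [m hm ->] [n hn ->] H x y z; rewrite !scalerA => /H [].
by move=> /(mulr_0l hl) -> /(mulr_0l hm) -> /(mulr_0l hn) ->.
Qed.
Lemma indep3_notspan a b c : indep3 a b c -> ~ span2 a b c.
Proof.
move=> H [x [y hc]]; have := H x y (-1); rewrite scaleN1r -hc subrr.
by case=> // _ _ /eqP; rewrite oppr_eq0 oner_eq0.
Qed.
Lemma notspan_indep3 a b c : indep2 a b -> ~ span2 a b c -> indep3 a b c.
Proof.
move=> H hs x y z E0; have [z0|zn0] := eqVneq z 0.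
  by move: E0; rewrite z0 scale0r addr0 => /H [-> ->].
exfalso; apply: hs; exists (- (z^-1 * x)), (- (z^-1 * y)).
have hzc : z *: c = - (x *: a + y *: b) by apply/eqP; rewrite -addr_eq0 addrC E0.
by rewrite -[c]scale1r -(mulVK zn0) -scalerA hzc scalerN scalerDr !scalerA !scaleNr opprD.
Qed.
Lemma indep3_2of a b c : indep3 a b c -> indep2 b c.
Proof. by move/indep3_213/indep3_132/indep3_12. Qed.
Lemma indep3_13 a b c : indep3 a b c -> indep2 a c.
Proof. by move/indep3_132/indep3_12. Qed.
Lemma indep3_a_bc a b c : indep3 a b c -> indep2 a (b + c).
Proof. by move=> H d e; rewrite scalerDr addrA => /H [] -> ->. Qed.
Lemma indep3_ab_c a b c : indep3 a b c -> indep2 (a + b) c.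
Proof. by move=> H d e; rewrite scalerDr => /H [] -> _ ->. Qed.

Lemma inter1 a b c v : indep3 a b c -> span2 (a + b) c v -> span2 (a + c) b v ->
  line (a + b + c) v.
Proof.
move=> H [al [be ->]] [ga [de E0]]; exists al.
have E1 : ga *: (a + c) + de *: b = ga *: a + de *: b + ga *: c.
  by rewrite scalerDr addrAC.
move: E0; rewrite E1 scalerDr => /(indep3_coef H) [] h1 h2 h3.
by rewrite h3 -h1 !scalerDr.
Qed.
Lemma inter2 a b c v : indep3 a b c -> span2 (a + b + c) a v -> span2 b c v ->
  line (b + c) v.
Proof.
move=> H [al [be ->]] [ga [de E0]]; exists al.
have E1 : al *: (a + b + c) + be *: a = (al + be) *: a + al *: b + al *: c.
  by rewrite !scalerDr scalerDl addrAC (addrAC (al *: a)).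
have E2 : ga *: b + de *: c = 0 *: a + ga *: b + de *: c by rewrite scale0r add0r.
move: E0; rewrite E1 E2 => /(indep3_coef H) [] h1 h2 h3.
by rewrite h1 scale0r add0r scalerDr.
Qed.

Lemma exch1 a b x (al be : K) : al != 0 -> x = al *: a + be *: b -> span2 x b a.
Proof.
move=> han hx; exists al^-1, (- (al^-1 * be)).
rewrite hx scalerDr !scalerA mulVK // scale1r scaleNr addrK //.
Qed.
Lemma plane3_aux a b x y z (al be : K) : al != 0 -> x = al *: a + be *: b ->
  indep3 x y z -> span2 a b y -> span2 a b z -> False.
Proof.
move=> han hx H hy hz.
have hab : forall v, span2 a b v -> span2 x b v.
  by move=> v; apply: span2_sub; [apply: exch1 hx | apply: span2_r].
have [ga [de hy']] := hab _ hy.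
have [de0|den0] := eqVneq de 0.
  apply: (indep2_notline (indep3_12 H)); exists ga.
  by rewrite hy' de0 scale0r addr0.
have hb : span2 y x b by apply: (exch1 den0); rewrite hy' addrC.
apply: (indep3_notspan H); apply: (span2_sub (span2_l x y) _ (hab _ hz)).
exact: span2_sym.
Qed.
Lemma plane3 a b x y z : indep3 x y z -> span2 a b x -> span2 a b y -> span2 a b z -> False.
Proof.
move=> H [al [be hx]] hy hz; have [al0|aln0] := eqVneq al 0; last first.
  exact: (plane3_aux aln0 hx H hy hz).
have [be0|ben0] := eqVneq be 0.
  by move/indep3_12/indep2_neq0l: H; rewrite hx al0 be0 !scale0r addr0 eqxx.
apply: (plane3_aux ben0 (a := b) (b := a) (be := al)) H _ _.
- by rewrite addrC.
- exact: span2_sym.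
- exact: span2_sym.
Qed.
Lemma out_of_plane a b x y z : indep3 x y z ->
  ~ span2 a b x \/ ~ span2 a b y \/ ~ span2 a b z.
Proof.
move=> H; case: (classic (span2 a b x)) => hx; last by left.
case: (classic (span2 a b y)) => hy; last by right; left.
case: (classic (span2 a b z)) => hz; last by right; right.
by case: (plane3 H hx hy hz).
Qed.

End LA.


Lemma mk_rmorph (K1 K2 : unitRingType) (s : K1 -> K2)
  (h0 : s 0 = 0) (hD : forall x y, s (x + y) = s x + s y)
  (h1 : s 1 = 1) (hM : forall x y, s (x * y) = s x * s y) :
  exists sigma : {rmorphism K1 -> K2}, forall x, sigma x = s x.
Proof.
pose m1 := GRing.isNmodMorphism.Build K1 K2 s (h0, hD).
pose m2 := GRing.isMonoidMorphism.Build K1 K2 s (h1, hM).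
pose sg : {rmorphism K1 -> K2} := HB.pack s m1 m2.
by exists sg.
Qed.

Section Core.
Variables K1 K2 : unitRingType.
Hypothesis hK1 : division_ring K1.
Hypothesis hK2 : division_ring K2.
Variables (E1 : lmodType K1) (E2 : lmodType K2).
Variable h : E1 -> E2.
Hypothesis hH : forall (u w : E1) (a c : K1), span2 (h u) (h w) (h (a *: u + c *: w)).
Variables p q r : E1.
Hypothesis hpqr : indep3 (h p) (h q) (h r).

Lemma h_scale (u : E1) (a : K1) : line (h u) (h (a *: u)).
Proof.
have := hH u u a 0; rewrite scale0r addr0 => H.
exact: span2_line (line_refl _) (line_refl _) H.
Qed.
Lemma h_add (u w : E1) : span2 (h u) (h w) (h (u + w)).
Proof. by have := hH u w 1 1; rewrite !scale1r. Qed.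
Lemma h_sub (u w : E1) : span2 (h u) (h w) (h (u - w)).
Proof. by have := hH u w 1 (-1); rewrite scale1r scaleN1r. Qed.
Lemma h0 : h 0 = 0.
Proof.
have H1 := h_scale p 0; have H2 := h_scale q 0; rewrite scale0r in H1; rewrite scale0r in H2.
exact: (line_inter (indep3_12 hpqr) H1 H2).
Qed.
Lemma h_scale_sim (u : E1) (a : K1) : a != 0 -> sim (h u) (h (a *: u)).
Proof.
move=> ha; apply: line_line_sim; first exact: h_scale.
by have := h_scale (a *: u) a^-1; rewrite scalerA (mulVK hK1 ha) scale1r.
Qed.
Lemma h_addz (u x : E1) : h x = 0 -> sim (h u) (h (u + x)).
Proof.
move=> hx; apply: line_line_sim.
  by apply: span2_line (line_refl _) _ (h_add u x); rewrite hx; apply: line0.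
have := h_sub (u + x) x; rewrite addrK => H.
by apply: span2_line (line_refl _) _ H; rewrite hx; apply: line0.
Qed.

Definition C (y x : E1) := h x = 0 \/ indep2 (h y) (h x).
Definition Rel (y : E1) (y' : E2) (x : E1) (x' : E2) :=
  sim (h x) x' /\ sim (h (y + x)) (y' + x').

Lemma Rel_zero y y' x : sim (h y) y' -> h x = 0 -> Rel y y' x 0.
Proof.
move=> hy hx; split; first by rewrite hx; apply: sim_refl.
rewrite addr0. exact: (sim_trans hK2 (sim_sym hK2 (h_addz y hx)) hy).
Qed.

Lemma Rel_ex y y' x : sim (h y) y' -> C y x -> exists x', Rel y y' x x'.
Proof.
move=> hy [hx|Hi]; first by exists 0; apply: Rel_zero.
have hs : span2 y' (h x) (h (y + x)).
  apply: span2_sub (h_add y x); last exact: span2_r.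
  apply: line_span2; apply: sim_line. exact: (sim_sym hK2 hy).
have [al [be E0]] := hs.
have hy' : line y' (h y) by apply: sim_line; exact: (sim_sym hK2 hy).
have aln0 : al != 0.
  apply/eqP => al0; apply: (indep2_notline (indep2_sym Hi)).
  have := h_sub (y + x) x; rewrite addrK; apply: span2_line (line_refl _).
  by rewrite E0 al0 scale0r add0r; exists be.
have ben0 : be != 0.
  apply/eqP => be0; apply: (indep2_notline Hi).
  apply: (line_of_sim hK2 (sim_sym hK2 hy)).
  have := h_sub (y + x) y; rewrite addrAC subrr add0r; apply: span2_line _ hy'.
  by rewrite E0 be0 scale0r addr0; exists al.
exists ((al^-1 * be) *: h x); split.
  by apply: sim_scale; exact: (mulf_neq0' hK2 (invr_neq0 aln0) ben0).
exists al^-1; first exact: invr_neq0.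
by rewrite E0 scalerDr !scalerA (mulVK hK2 aln0) scale1r.
Qed.

Lemma Rel_uniq y y' x x1 x2 : sim (h y) y' -> C y x -> Rel y y' x x1 -> Rel y y' x x2 -> x1 = x2.
Proof.
move=> hy [hx|Hi] [s1 t1] [s2 t2].
  by rewrite hx in s1 s2; rewrite (sim0 s1) (sim0 s2).
case: s1 t1 => m1 hm1 -> t1; case: s2 t2 => m2 hm2 -> t2.
case: hy t1 t2 => l hl -> t1 t2.
have [k hk ek] := sim_trans hK2 (sim_sym hK2 t2) t1.
move: ek; rewrite scalerDr !scalerA => /(indep2_coef Hi) [el em].
have k1 : k = 1.
  by rewrite -[k]mulr1 -(mulKV hK2 hl) mulrA -el mulKV.
by rewrite em k1 mul1r.
Qed.

Lemma Rel_sym y y' x x' : sim (h y) y' -> Rel y y' x x' -> Rel x x' y y'.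
Proof. by move=> hy [hx hxy]; split=> //; rewrite addrC [x' + _]addrC. Qed.

Lemma triangle y y' z z' x x' : sim (h y) y' -> indep3 (h y) (h z) (h x) ->
  Rel y y' z z' -> Rel y y' x x' -> Rel z z' x x'.
Proof.
move=> sy H [sz szz] [sx sxx]; split => //.
have H' : indep3 y' z' x' := indep3_sim hK2 sy sz sx H.
have lyz : line (y' + z') (h (y + z)) by apply: sim_line; exact: (sim_sym hK2 szz).
have lyx : line (y' + x') (h (y + x)) by apply: sim_line; exact: (sim_sym hK2 sxx).
have lx : line x' (h x) by apply: sim_line; exact: (sim_sym hK2 sx).
have lz : line z' (h z) by apply: sim_line; exact: (sim_sym hK2 sz).
have ly : line y' (h y) by apply: sim_line; exact: (sim_sym hK2 sy).
have hw1 : span2 (y' + z') x' (h (y + z + x)).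
  apply: span2_sub (h_add (y + z) x); first exact: line_span2.
  by apply: span2_sym; apply: line_span2.
have hw2 : span2 (y' + x') z' (h (y + z + x)).
  rewrite addrAC; apply: span2_sub (h_add (y + x) z); first exact: line_span2.
  by apply: span2_sym; apply: line_span2.
have hw := inter1 H' hw1 hw2.
have e2 : y + z + x - y = z + x.
  by rewrite addrAC (addrAC y) subrr add0r.
have hzx1 : span2 (y' + z' + x') y' (h (z + x)).
  rewrite -e2; apply: span2_sub (h_sub _ _); first exact: line_span2.
  by apply: span2_sym; apply: line_span2.
have hzx2 : span2 z' x' (h (z + x)).
  apply: span2_sub (h_add z x); first exact: line_span2.
  by apply: span2_sym; apply: line_span2.
have hl := inter2 H' hzx1 hzx2.
have hnz : h (z + x) != 0.
  apply/eqP => h0'; apply: (indep2_notline (indep2_sym (indep3_2of H))).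
  have := h_sub (z + x) x; rewrite addrK; apply: span2_line (line_refl _).
  by rewrite h0'; apply: line0.
exact: (line_sim_nz hK2 hl hnz).
Qed.

Lemma outside (a b : E2) : exists r0, ~ span2 a b (h r0).
Proof.
by case: (out_of_plane hK2 a b hpqr) => [H|[H|H]]; eexists; exact: H.
Qed.

Lemma CL y y' z z' x x' : sim (h y) y' -> indep2 (h y) (h z) -> Rel y y' z z' ->
  C y x -> C z x -> Rel y y' x x' -> Rel z z' x x'.
Proof.
move=> sy Hyz Rz Cy Cz Rx.
have [hx0|hxn0] := eqVneq (h x) 0.
  have x'0 : x' = 0 by case: Rx => s _; rewrite hx0 in s; apply: sim0 s.
  by rewrite x'0; apply: Rel_zero => //; case: Rz.
have Hyx : indep2 (h y) (h x) by case: Cy => // /eqP; rewrite (negbTE hxn0).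
have Hzx : indep2 (h z) (h x) by case: Cz => // /eqP; rewrite (negbTE hxn0).
case: (classic (span2 (h y) (h z) (h x))) => hin; last first.
  exact: (triangle sy (notspan_indep3 hK2 Hyz hin) Rz Rx).
have [r0 hr0] := outside (h y) (h z).
have H3 : indep3 (h y) (h z) (h r0) := notspan_indep3 hK2 Hyz hr0.
have [r' Rr] := Rel_ex sy (or_intror (indep3_13 H3)).
have Rzr : Rel z z' r0 r' := triangle sy H3 Rz Rr.
have H4 : indep3 (h y) (h x) (h r0).
  apply: (notspan_indep3 hK2 Hyx) => hs; apply: hr0.
  exact: span2_sub (span2_l _ _) hin hs.
have Rrx : Rel r0 r' x x' := triangle sy (indep3_132 H4) Rr Rx.
have H5 : indep3 (h z) (h x) (h r0).
  apply: (notspan_indep3 hK2 Hzx) => hs; apply: hr0.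
  exact: span2_sub (span2_r _ _) hin hs.
have sr : sim (h r0) r' by case: Rr.
have sz : sim (h z) z' by case: Rz.
exact: triangle sr (indep3_213 (indep3_132 H5)) (Rel_sym sz Rzr) Rrx.
Qed.


Definition T (y : E1) (y' : E2) (x : E1) : E2 :=
  epsilon (inhabits 0) (fun x' => Rel y y' x x').
Lemma T_spec y y' x : sim (h y) y' -> C y x -> Rel y y' x (T y y' x).
Proof. by move=> hy hc; apply: epsilon_spec; apply: Rel_ex. Qed.

Definition fq' := T p (h p) q.
Definition f (x : E1) : E2 :=
  if excluded_middle_informative (C p x) then T p (h p) x else T q fq' x.

Lemma hp0 : h p != 0.
Proof. exact: indep2_neq0l (indep3_12 hpqr). Qed.
Lemma Cpq : C p q.
Proof. by right; apply: indep3_12 hpqr. Qed.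
Lemma Cqp : C q p.
Proof. by right; apply: indep2_sym (indep3_12 hpqr). Qed.
Lemma Rpq : Rel p (h p) q fq'.
Proof. exact: T_spec (sim_refl _) Cpq. Qed.
Lemma sq : sim (h q) fq'.
Proof. by case: Rpq. Qed.
Lemma notCpp : ~ C p p.
Proof. by case=> [/eqP|]; [rewrite (negbTE hp0) | apply: indep2_self]. Qed.
Lemma f_C x : C p x -> f x = T p (h p) x.
Proof. by rewrite /f; case: excluded_middle_informative. Qed.
Lemma f_nC x : ~ C p x -> f x = T q fq' x.
Proof. by rewrite /f; case: excluded_middle_informative. Qed.
Lemma notC y x : h y != 0 -> ~ C y x -> h x != 0 /\ line (h y) (h x).
Proof.
move=> hy hn; have hx : h x != 0 by apply/eqP => hx; apply: hn; left.
split=> //; apply: (notindep_line hK2 hy) => hi; apply: hn; by right.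
Qed.
Lemma nC_Cq x : ~ C p x -> C q x.
Proof.
move=> /(notC hp0) [hx hl]; right; apply: indep2_sym.
exact: (indep2_line hK2 (indep3_12 hpqr) hl hx).
Qed.
Lemma f_sim x : sim (h x) (f x).
Proof.
case: (classic (C p x)) => hc.
  by rewrite f_C //; case: (T_spec (sim_refl (h p)) hc).
by rewrite f_nC //; case: (T_spec sq (nC_Cq hc)).
Qed.
Lemma fp : f p = h p.
Proof.
rewrite f_nC; last exact: notCpp.
apply: (Rel_uniq sq Cqp); first exact: T_spec sq Cqp.
exact: Rel_sym (sim_refl _) Rpq.
Qed.
Lemma fq : f q = fq'.
Proof. by rewrite f_C //; apply: Cpq. Qed.

Definition compat y := forall x, C y x -> Rel y (f y) x (f x).
Lemma compat_p : compat p.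
Proof. by move=> x Cx; rewrite fp f_C //; apply: T_spec (sim_refl _) Cx. Qed.
Lemma compat_q : compat q.
Proof.
move=> x Cqx; rewrite fq; case: (classic (C p x)) => Cpx.
  rewrite f_C //; apply: (CL (y := p) (y' := h p)) => //.
  - exact: sim_refl.
  - exact: indep3_12 hpqr.
  - exact: Rpq.
  - exact: T_spec (sim_refl _) Cpx.
by rewrite f_nC //; apply: T_spec sq Cqx.
Qed.
Lemma step2 y z x : compat y -> indep2 (h y) (h z) -> C y x -> C z x ->
  Rel z (f z) x (f x).
Proof.
move=> Hy Hyz Cyx Czx.
have Ryz : Rel y (f y) z (f z) := Hy z (or_intror Hyz).
exact: (CL (f_sim y) Hyz Ryz Cyx Czx (Hy x Cyx)).
Qed.
Lemma spq : sim (h (p + q)) (h p + fq').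
Proof. by case: Rpq. Qed.
Lemma Ipq : indep2 (h p) (h q).
Proof. exact: indep3_12 hpqr. Qed.
Lemma Ipq2 : indep2 (h p) (h (p + q)) /\ indep2 (h q) (h (p + q)).
Proof.
have I' : indep2 (h p) fq' := indep2_sim hK2 (sim_refl _) sq Ipq.
have [I1 I2] := indep2_add I'.
split.
  exact: (indep2_sim hK2 (sim_refl _) (sim_sym hK2 spq) I1).
exact: (indep2_sim hK2 (sim_sym hK2 sq) (sim_sym hK2 spq) I2).
Qed.
Lemma compat_pq : compat (p + q).
Proof.
move=> x Cx; case: (classic (C p x)) => Cpx.
  exact: (step2 compat_p Ipq2.1 Cpx Cx).
exact: (step2 compat_q Ipq2.2 (nC_Cq Cpx) Cx).
Qed.

Lemma Main z x : h z != 0 -> C z x -> Rel z (f z) x (f x).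
Proof.
move=> hz Cx.
have hq0 : h q != 0 := indep2_neq0r Ipq.
have hpq0 : h (p + q) != 0 := indep2_neq0r Ipq2.1.
case: (classic (indep2 (h p) (h z) /\ C p x)) => [[H1 H2]|n1].
  exact: (step2 compat_p H1 H2 Cx).
case: (classic (indep2 (h q) (h z) /\ C q x)) => [[H1 H2]|n2].
  exact: (step2 compat_q H1 H2 Cx).
apply: (step2 compat_pq) => //.
  apply: NNPP => hn; have hl := notindep_line hK2 hpq0 hn.
  have Ip : indep2 (h p) (h z).
    exact: indep2_sym (indep2_line hK2 (indep2_sym Ipq2.1) hl hz).
  have Iq : indep2 (h q) (h z).
    exact: indep2_sym (indep2_line hK2 (indep2_sym Ipq2.2) hl hz).
  have nCp : ~ C p x by move=> c; apply: n1.
  have nCq : ~ C q x by move=> c; apply: n2.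
  have [hx lpx] := notC hp0 nCp; have [_ lqx] := notC hq0 nCq.
  by move/eqP: hx; apply; apply: line_inter Ipq lpx lqx.
apply: NNPP => nC; have [hx hl] := notC hpq0 nC.
have Cp : C p x by right; exact: indep2_sym (indep2_line hK2 (indep2_sym Ipq2.1) hl hx).
have Cq : C q x by right; exact: indep2_sym (indep2_line hK2 (indep2_sym Ipq2.2) hl hx).
have lpz : line (h p) (h z).
  by apply: (notindep_line hK2 hp0) => I; apply: n1.
have lqz : line (h q) (h z).
  by apply: (notindep_line hK2 hq0) => I; apply: n2.
by move/eqP: hz; apply; apply: line_inter Ipq lpz lqz.
Qed.


Lemma f_zero v : h v = 0 -> f v = 0.
Proof. by move=> hv; have := f_sim v; rewrite hv => /sim0. Qed.
Lemma f_nz v : h v != 0 -> f v != 0.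
Proof. exact: (sim_neq0 hK2 (f_sim v)). Qed.
Lemma fsim_of v w : sim (h v) w -> sim w (f v).
Proof. by move=> s; exact: (sim_trans hK2 (sim_sym hK2 s) (f_sim v)). Qed.
Lemma indep_out (a : E2) : a != 0 -> exists z, indep2 a (h z).
Proof.
move=> ha; have [z hz] := outside a a; exists z.
by apply: (notline_indep2 hK2 ha) => hl; apply: hz; apply: line_span2.
Qed.

Lemma add_indep x y : indep2 (h x) (h y) -> f (x + y) = f x + f y.
Proof.
move=> Hxy.
have [z hz] := outside (h x) (h y).
have H3 : indep3 (h x) (h y) (h z) := notspan_indep3 hK2 Hxy hz.
have F3 : indep3 (f z) (f x) (f y).
  exact: (indep3_sim hK2 (f_sim z) (f_sim x) (f_sim y) (indep3_213 (indep3_132 H3))).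
have hx0 : h x != 0 := indep2_neq0l Hxy.
have hz0 : h z != 0 := indep2_neq0r (indep3_13 H3).
have [_ Mxy] := Main hx0 (or_intror Hxy).
have [al hal e1] := fsim_of Mxy.
have [_ Mzx] := Main hz0 (or_intror (indep2_sym (indep3_13 H3))).
have [be hbe e2] := fsim_of Mzx.
have Cz : C z (x + y).
  right; apply: (indep2_sim hK2 (sim_sym hK2 (f_sim z)) (sim_sym hK2 Mxy)).
  exact: indep3_a_bc F3.
have [_ M1] := Main hz0 Cz.
have Izx : indep2 (h (z + x)) (h y).
  apply: (indep2_sim hK2 (sim_sym hK2 Mzx) (sim_sym hK2 (f_sim y))).
  exact: indep3_ab_c F3.
have [_ M2] := Main (indep2_neq0l Izx) (or_intror Izx).
rewrite -addrA in M2.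
have [nu hnu e3] := sim_trans hK2 (sim_sym hK2 M1) M2.
move: e3; rewrite e1 e2 !scalerDr !scalerA addrA.
rewrite -[f y in X in X = _]scale1r => /(indep3_coef F3) [hb1 hb2 hb3].
have al1 : al = 1.
  apply/eqP; rewrite -subr_eq0; apply/eqP; apply: (mulr_0r hK2 hnu).
  by rewrite mulrBr mulr1 -hb2 hb1 subrr.
by rewrite al1 ?scale1r.
Qed.


Lemma add_dep x y : h x != 0 -> h y != 0 -> ~ indep2 (h x) (h y) -> f (x + y) = f x + f y.
Proof.
move=> hx hy n.
have hxy : line (h x) (h y) := notindep_line hK2 hx n.
have [z Ixz] := indep_out hx.
have ezx : f (z + x) = f z + f x := add_indep (indep2_sym Ixz).
have lfy : line (f x) (f y) := line_sim_r (line_of_sim hK2 (f_sim x) hxy) (f_sim y).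
have [t ht ety] := sim_sym hK2 (line_sim_nz hK2 lfy (f_nz hy)).
have I2 : indep2 (f z) (f x) := indep2_sim hK2 (f_sim z) (f_sim x) (indep2_sym Ixz).
have lxy : line (h x) (h (x + y)) := span2_line (line_refl _) hxy (h_add x y).
have Cz : C z (x + y).
  have [e|ne] := eqVneq (h (x + y)) 0; first by left.
  by right; exact: indep2_sym (indep2_line hK2 Ixz lxy ne).
have [_ M1] := Main (indep2_neq0r Ixz) Cz.
have Izx : indep2 (h (z + x)) (h y).
  apply: (indep2_sim hK2 (sim_sym hK2 (f_sim (z + x))) (sim_sym hK2 (f_sim y))).
  rewrite ezx ety.
  exact: (indep2_sim hK2 (sim_refl _) (sim_scale (f x) ht) (indep2_addl I2)).
have [_ M2] := Main (indep2_neq0l Izx) (or_intror Izx).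
rewrite -addrA in M2.
have [nu hnu e3] := sim_trans hK2 (sim_sym hK2 M1) M2.
have lfxy : line (f x) (f (x + y)) := line_sim_r (line_of_sim hK2 (f_sim x) lxy) (f_sim (x + y)).
have [mu emu] := lfxy.
have E : 1 *: f z + (1 + t) *: f x = nu *: f z + (nu * mu) *: f x.
  rewrite scale1r scalerDl scale1r addrA -ety -ezx e3 emu scalerDr scalerA //.
have [h1 h2] := indep2_coef I2 E.
by rewrite emu ety -h1 mul1r in h2 *; rewrite -h2 scalerDl scale1r.
Qed.

Lemma add_zero_l x y : h x = 0 -> f (x + y) = f y.
Proof.
move=> hx.
have shxy : sim (h y) (h (x + y)) by rewrite addrC; exact: (h_addz y hx).
have [hy|hy] := eqVneq (h y) 0.
  rewrite (f_zero hy) f_zero //; apply: sim0; rewrite -hy //.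
have [z Iyz] := indep_out hy.
have [_ M1] := Main (indep2_neq0r Iyz) (or_intror (indep2_sym Iyz)).
have Cz : C z (x + y).
  by right; exact: (indep2_sim hK2 (sim_refl _) shxy (indep2_sym Iyz)).
have [_ M2] := Main (indep2_neq0r Iyz) Cz.
have s3 : sim (h (z + y)) (h (z + (x + y))).
  by have := h_addz (z + y) hx; rewrite -addrA (addrC y).
have [nu hnu e] := sim_trans hK2 (sim_trans hK2 (sim_sym hK2 M1) s3) M2.
have I2 : indep2 (f z) (f y) := indep2_sim hK2 (f_sim z) (f_sim y) (indep2_sym Iyz).
have lf : line (f y) (f (x + y)) :=
  line_sim_r (line_of_sim hK2 (f_sim y) (sim_line shxy)) (f_sim (x + y)).
have [mu emu] := lf.
have E : 1 *: f z + mu *: f y = nu *: f z + nu *: f y.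
  by rewrite scale1r -emu e scalerDr.
have [h1 h2] := indep2_coef I2 E.
by rewrite emu h2 -h1 scale1r.
Qed.

Lemma f_add x y : f (x + y) = f x + f y.
Proof.
have [hx|hx] := eqVneq (h x) 0; first by rewrite add_zero_l // (f_zero hx) add0r.
have [hy|hy] := eqVneq (h y) 0; first by rewrite addrC add_zero_l // (f_zero hy) addr0.
case: (classic (indep2 (h x) (h y))) => I; first exact: add_indep.
exact: add_dep.
Qed.

Lemma f_scale_ex v a : exists c, f (a *: v) = c *: f v.
Proof.
have := line_sim_r (line_of_sim hK2 (f_sim v) (h_scale v a)) (f_sim _).
by case=> c e; exists c.
Qed.
Lemma scale_same u v a c d : indep2 (h u) (h v) -> f (a *: u) = c *: f u ->
  f (a *: v) = d *: f v -> c = d.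
Proof.
move=> I eu ev; have [e ee] := f_scale_ex (u + v) a.
have I2 : indep2 (f u) (f v) := indep2_sim hK2 (f_sim u) (f_sim v) I.
have E : c *: f u + d *: f v = e *: f u + e *: f v.
  by rewrite -eu -ev -f_add -scalerDr ee f_add scalerDr.
by have [-> ->] := indep2_coef I2 E.
Qed.
Lemma scale_uniform v a c : f (a *: p) = c *: f p -> f (a *: v) = c *: f v.
Proof.
move=> H; have [hv|hv] := eqVneq (h v) 0.
  have := h_scale v a; rewrite hv => -[k]; rewrite scaler0 => ek.
  by rewrite (f_zero ek) (f_zero hv) scaler0.
have [d ed] := f_scale_ex v a; rewrite ed; congr (_ *: _).
case: (classic (indep2 (h p) (h v))) => I.
  by symmetry; exact: (scale_same I H ed).
have lpv := notindep_line hK2 hp0 I.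
have [z Ipz] := indep_out hp0.
have Izv : indep2 (h z) (h v) := indep2_sym (indep2_line hK2 Ipz lpv hv).
have [e ez] := f_scale_ex z a.
rewrite (scale_same Ipz H ez).
symmetry; exact: (scale_same Izv ez ed).
Qed.

Definition sg (a : K1) : K2 := epsilon (inhabits 0) (fun c => f (a *: p) = c *: f p).
Lemma sg_spec a : f (a *: p) = sg a *: f p.
Proof. by apply: (epsilon_spec (inhabits 0) (fun c => f (a *: p) = c *: f p)); apply: f_scale_ex. Qed.
Lemma f_scale v a : f (a *: v) = sg a *: f v.
Proof. exact: scale_uniform (sg_spec a). Qed.
Lemma fp0 : f p != 0.
Proof. exact: f_nz hp0. Qed.
Lemma sg0 : sg 0 = 0.
Proof.
apply: (scale_cancel hK2 fp0); rewrite -f_scale !scale0r.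
by rewrite f_zero // h0.
Qed.
Lemma sgD a b : sg (a + b) = sg a + sg b.
Proof.
apply: (scale_cancel hK2 fp0).
by rewrite scalerDl -!f_scale -f_add scalerDl.
Qed.
Lemma sg1 : sg 1 = 1.
Proof. by apply: (scale_cancel hK2 fp0); rewrite -f_scale !scale1r. Qed.
Lemma sgM a b : sg (a * b) = sg a * sg b.
Proof.
apply: (scale_cancel hK2 fp0).
by rewrite -f_scale -(scalerA a b p) f_scale f_scale scalerA.
Qed.

Lemma core_thm : exists F : E1 -> E2, semilinear_map F /\ forall v, sim (h v) (F v).
Proof.
exists f; split; last exact: f_sim.
split; first exact: f_add.
have [sigma hs] := mk_rmorph sg0 sgD sg1 sgM.
by exists sigma => a v; rewrite hs f_scale.
Qed.

End Core.


Lemma pred_ext (T : Type) (A B : T -> Prop) : (forall x, A x <-> B x) -> A = B.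
Proof.
move=> H; apply: functional_extensionality => x; apply: propositional_extensionality; exact: H.
Qed.

Section Dual.
Variable K : unitRingType.
Hypothesis hK : division_ring K.
Variables (E : lmodType K) (F : lmodType K^c) (b : E -> F -> K).
Hypothesis hb : dual_pair b.

Lemma bD1 x1 x2 y : b (x1 + x2) y = b x1 y + b x2 y.
Proof. by case: hb => [[H _ _ _] _]. Qed.
Lemma bD2 x y1 y2 : b x (y1 + y2) = b x y1 + b x y2.
Proof. by case: hb => [[_ H _ _] _]. Qed.
Lemma bZ1 (a : K) x y : b (a *: x) y = a * b x y.
Proof. by case: hb => [[_ _ H _] _]. Qed.
Lemma bZ2 (a : K) x (y : F) : b x ((a : K^c) *: y) = b x y * a.
Proof. by case: hb => [[_ _ _ H] _]. Qed.
Lemma nd1 x : (forall y, b x y = 0) -> x = 0.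
Proof. by case: hb => [_ [H _]]; apply: H. Qed.
Lemma b0l y : b 0 y = 0.
Proof. by rewrite -(scale0r (0 : E)) bZ1 mul0r. Qed.
Lemma bNr x (y : F) : b x (- y) = - b x y.
Proof. by rewrite -scaleN1r bZ2 mulrN1. Qed.
Lemma bBr x (y1 y2 : F) : b x (y1 - y2) = b x y1 - b x y2.
Proof. by rewrite bD2 bNr. Qed.

Lemma sub_pp (A : E -> Prop) x : A x -> perpF b (perpE b A) x.
Proof. by move=> Ax y hy; apply: hy. Qed.
Lemma pp_mono (A B : E -> Prop) : (forall x, A x -> B x) ->
  forall x, perpF b (perpE b A) x -> perpF b (perpE b B) x.
Proof. by move=> H x hx y hy; apply: hx => z Az; apply: hy; apply: H. Qed.
Lemma pp_ext (A B : E -> Prop) : (forall x, A x <-> B x) ->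
  perpF b (perpE b A) = perpF b (perpE b B).
Proof.
move=> H; apply: pred_ext => x; split; apply: pp_mono => z; by case: (H z).
Qed.
Lemma ppp (A : E -> Prop) : is_closed b (perpF b (perpE b A)).
Proof.
apply: pred_ext => x; split; last exact: sub_pp.
by move=> hx y hy; apply: hx => z hz; apply: hz.
Qed.
Lemma cjoin_closed (S : LF b -> Prop) : is_closed b (cjoin S).
Proof. exact: ppp. Qed.
Lemma cjoin_is (S : LF b -> Prop) (X : LF b) :
  (forall x, (exists2 A : LF b, S A & proj1_sig A x) <-> proj1_sig X x) ->
  cjoin S = proj1_sig X.
Proof. by move=> H; rewrite /cjoin (pp_ext H); apply: (proj2_sig X). Qed.
Lemma pp_empty (P : E -> Prop) : (forall x, ~ P x) ->
  forall x, perpF b (perpE b P) x <-> x = 0.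
Proof.
move=> H x; split.
  by move=> hx; apply: nd1 => y; apply: hx => z /H.
by move=> -> y _; apply: b0l.
Qed.

Lemma closed_in (A : LF b) x : perpF b (perpE b (proj1_sig A)) x -> proj1_sig A x.
Proof. by rewrite (proj2_sig A). Qed.
Lemma closed0 (A : LF b) : proj1_sig A 0.
Proof. by apply: closed_in => y _; apply: b0l. Qed.
Lemma closedD (A : LF b) x y : proj1_sig A x -> proj1_sig A y -> proj1_sig A (x + y).
Proof.
move=> hx hy; apply: closed_in => z hz.
by rewrite bD1 (hz _ hx) (hz _ hy) addr0.
Qed.
Lemma closedZ (A : LF b) (c : K) x : proj1_sig A x -> proj1_sig A (c *: x).
Proof. by move=> hx; apply: closed_in => z hz; rewrite bZ1 (hz _ hx) mulr0. Qed.
Lemma closed_line (A : LF b) x : proj1_sig A x -> forall z, line x z -> proj1_sig A z.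
Proof. by move=> hx z [c ->]; apply: closedZ. Qed.
Lemma closed_span2 (A : LF b) x y : proj1_sig A x -> proj1_sig A y ->
  forall z, span2 x y z -> proj1_sig A z.
Proof. by move=> hx hy z [c [d ->]]; apply: closedD; apply: closedZ. Qed.

Lemma zero_closed x : perpF b (perpE b (zero_set (E:=E))) x -> x = 0.
Proof. by move=> hx; apply: nd1 => y; apply: hx => z ->; apply: b0l. Qed.

Lemma ext_closed (A : E -> Prop) (v : E) :
  (forall x, perpF b (perpE b A) x -> A x) ->
  forall x, perpF b (perpE b (fun x => exists a c, A a /\ x = a + c *: v)) x ->
    exists a c, A a /\ x = a + c *: v.
Proof.
move=> hA x hx.
case: (classic (exists2 y0, perpE b A y0 & b v y0 != 0)) => [[y0 hy0 hk]|hn].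
  set k := b v y0; set c := b x y0 * k^-1.
  exists (x - c *: v), c; split; last by rewrite subrK.
  apply: hA => y hy.
  set y' := y - ((k^-1 * b v y : K) : K^c) *: y0.
  have hy'B : perpE b (fun x => exists a c, A a /\ x = a + c *: v) y'.
    move=> z [a [d [Aa ->]]].
    rewrite bD1 bZ1 !bBr !bZ2 (hy _ Aa) (hy0 _ Aa) mul0r subrr add0r.
    by rewrite mulrA (mulrV (hK hk)) mul1r subrr mulr0.
  have := hx _ hy'B; rewrite bBr bZ2 => /eqP; rewrite subr_eq0 => /eqP e.
  by rewrite bD1 -scaleNr bZ1 e /c mulrA mulNr subrr.
have hv : forall y0, perpE b A y0 -> b v y0 = 0.
  by move=> y0 hy0; apply: NNPP => hne; apply: hn; exists y0 => //; apply/eqP.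
exists x, 0; split; last by rewrite scale0r addr0.
apply: hA => y hy; apply: hx => z [a [c [Aa ->]]].
by rewrite bD1 bZ1 (hy _ Aa) (hv _ hy) mulr0 addr0.
Qed.

Lemma line_closed (v : E) : is_closed b (line v).
Proof.
apply: pred_ext => x; split; last exact: sub_pp.
rewrite (pp_ext (B := fun x => exists a c, zero_set (E:=E) a /\ x = a + c *: v)).
  move/(ext_closed zero_closed) => [a [c [-> ->]]]; exists c; by rewrite add0r.
move=> z; split; first by case=> c ->; exists 0, c; rewrite add0r.
by case=> a [c [-> ->]]; exists c; rewrite add0r.
Qed.

Lemma span2_closed (u w : E) x : perpF b (perpE b (span2 u w)) x -> span2 u w x.
Proof.
rewrite (pp_ext (B := fun x => exists a c, line u a /\ x = a + c *: w)).
  have hl : forall x, perpF b (perpE b (line u)) x -> line u x.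
    by move=> z; rewrite (line_closed u).
  by move/(ext_closed hl) => [a [c [[d ->] ->]]]; exists d, c.
move=> z; split; first by case=> c [d ->]; exists (c *: u), d; split=> //; exists c.
by case=> a [c [[d ->] ->]]; exists d, c.
Qed.

End Dual.


Section Bridge.
Variables K1 K2 : unitRingType.
Hypotheses (hK1 : division_ring K1) (hK2 : division_ring K2).
Variables (E1 : lmodType K1) (F1 : lmodType K1^c) (b1 : E1 -> F1 -> K1).
Hypothesis hb1 : dual_pair b1.
Variables (E2 : lmodType K2) (F2 : lmodType K2^c) (b2 : E2 -> F2 -> K2).
Hypothesis hb2 : dual_pair b2.
Variable g : LF b1 -> LF b2.
Hypothesis hjoin : preserves_joins g.
Hypothesis hatom : forall A : LF b1, atom A -> atom (g A) \/ proj1_sig (g A) = zero_set (E:=E2).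
Hypothesis hlen : image_length_ge3 g.

Definition L1 (v : E1) : LF b1 := exist _ (line v) (line_closed hK1 hb1 v).
Definition L2 (v : E2) : LF b2 := exist _ (line v) (line_closed hK2 hb2 v).
Definition G (v : E1) : E2 -> Prop := proj1_sig (g (L1 v)).

Lemma g_ext (A B : LF b1) : proj1_sig A = proj1_sig B -> proj1_sig (g A) = proj1_sig (g B).
Proof.
move=> eAB.
have e1 : proj1_sig A = cjoin (fun X => X = B).
  rewrite eAB; symmetry; apply: cjoin_is => x.
  by split; [case=> X -> | exists B].
rewrite (hjoin e1); apply: cjoin_is => x; split.
  by case=> C [A' -> ->].
by move=> hx; exists (g B) => //; exists B.
Qed.

Lemma g_mono (A B : LF b1) : subset_of (proj1_sig A) (proj1_sig B) ->
  subset_of (proj1_sig (g A)) (proj1_sig (g B)).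
Proof.
move=> hAB.
have e1 : proj1_sig B = cjoin (fun X => X = A \/ X = B).
  symmetry; apply: cjoin_is => x; split.
    by case=> X [->|->] //; apply: hAB.
  by move=> hx; exists B => //; right.
move=> x hx; rewrite (hjoin e1); apply: sub_pp.
by exists (g A) => //; exists A => //; left.
Qed.

Lemma line0_zero (K : unitRingType) (E : lmodType K) : line (0 : E) = zero_set (E:=E).
Proof.
apply: pred_ext => x; split; first by case=> c ->; rewrite scaler0.
by move=> ->; apply: line0.
Qed.

Lemma g_zero : G 0 = zero_set (E:=E2).
Proof.
have H : forall z, ~ (exists2 A : LF b1, False & proj1_sig A z) by move=> z [].
have e1 : proj1_sig (L1 0) = cjoin (fun _ : LF b1 => False).
  rewrite /= line0_zero; apply: pred_ext => x; rewrite /cjoin; split.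
    by move=> e; apply/(pp_empty hb1 H); exact: e.
  by move/(pp_empty hb1 H).
have H2 : forall z, ~ (exists2 B : LF b2, (exists2 A' : LF b1, False & B = g A') & proj1_sig B z).
  by move=> z [B []].
rewrite /G (hjoin e1); apply: pred_ext => x; rewrite /cjoin; split.
  by move/(pp_empty hb2 H2).
by move=> e; apply/(pp_empty hb2 H2); exact: e.
Qed.

Lemma nonzero_elt (K : unitRingType) (E : lmodType K) (F : lmodType K^c) (b : E -> F -> K)
  (hb : dual_pair b) (A : LF b) :
  proj1_sig A <> zero_set (E:=E) -> exists2 w, proj1_sig A w & w != 0.
Proof.
move=> hA; apply: NNPP => hn; apply: hA; apply: pred_ext => x; split.
  move=> hx; apply: NNPP => hx0; apply: hn; exists x => //; exact/eqP.
by move=> ->; apply: closed0.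
Qed.

Lemma L1_atom v : v != 0 -> atom (L1 v).
Proof.
move=> hv; split.
  move=> e; move/eqP: hv; apply; have : line v v := line_refl v.
  by rewrite /L1 /= in e; rewrite e.
move=> B hB; case: (classic (proj1_sig B = zero_set (E:=E1))) => hz; first by left.
right; have [w Bw wn0] := nonzero_elt hb1 hz.
have [c ec] := hB _ Bw.
have cn0 : c != 0 by apply: contraNneq wn0 => c0; rewrite ec c0 scale0r.
have Bv : proj1_sig B v.
  have := closedZ hb1 c^-1 Bw; rewrite ec scalerA (mulVK hK1 cn0) scale1r //.
apply: pred_ext => x; split; first exact: hB.
by move=> hx; apply: (closed_line hb1 Bv).
Qed.

Lemma G_line v : exists w, G v = line w.
Proof.
have [->|hv] := eqVneq v 0; first by exists 0; rewrite g_zero line0_zero.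
case: (hatom (L1_atom hv)) => [[hA hat]|hz]; last first.
  by exists 0; rewrite /G hz line0_zero.
have [w Aw wn0] := nonzero_elt hb2 hA.
exists w; case: (hat (L2 w)).
- by move=> x /= hx; apply: (closed_line hb2 Aw).
- move=> e; exfalso; move/eqP: wn0; apply; have : line w w := line_refl w.
  by rewrite /L2 /= in e; rewrite e.
- by move=> e; rewrite /G -e.
Qed.

Definition hh (v : E1) : E2 := epsilon (inhabits 0) (fun w => G v = line w).
Lemma hh_spec v : G v = line (hh v).
Proof. exact: (epsilon_spec (inhabits 0) (fun w => G v = line w) (G_line v)). Qed.

Lemma hH_br (u w : E1) (a c : K1) : span2 (hh u) (hh w) (hh (a *: u + c *: w)).
Proof.
set S := fun X : LF b1 => X = L1 u \/ X = L1 w.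
pose J : LF b1 := exist _ (cjoin S) (cjoin_closed S).
have hsub : subset_of (proj1_sig (L1 (a *: u + c *: w))) (proj1_sig J).
  move=> x [d ->] y hy /=.
  have bu : b1 u y = 0 by apply: hy; exists (L1 u); [left | apply: line_refl].
  have bw : b1 w y = 0 by apply: hy; exists (L1 w); [right | apply: line_refl].
  by rewrite (bZ1 hb1) (bD1 hb1) !(bZ1 hb1) bu bw !mulr0 addr0 mulr0.
have hx : proj1_sig (g J) (hh (a *: u + c *: w)).
  apply: (g_mono hsub); rewrite -/(G _) hh_spec; exact: line_refl.
have eJ : proj1_sig J = cjoin S by [].
rewrite (hjoin eJ) in hx.
apply: (span2_closed hK2 hb2); move: hx; apply: pp_mono => z [C [A' [->|->] ->]].
  by rewrite -/(G u) hh_spec => -[d ->]; exists d, 0; rewrite scale0r addr0.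
by rewrite -/(G w) hh_spec => -[d ->]; exists 0, d; rewrite scale0r add0r.
Qed.


Lemma image_in (a c : E2) : (forall v, span2 a c (hh v)) ->
  forall (A : LF b1) x, proj1_sig (g A) x -> span2 a c x.
Proof.
move=> Hac A x hx.
set S := fun X : LF b1 => exists2 v, proj1_sig A v & X = L1 v.
have e1 : proj1_sig A = cjoin S.
  symmetry; apply: cjoin_is => z; split.
    by case=> X [v Av ->] hz; apply: (closed_line hb1 Av).
  by move=> hz; exists (L1 z); [exists z | apply: line_refl].
rewrite (hjoin e1) in hx.
apply: (span2_closed hK2 hb2); move: hx; apply: pp_mono => z [C [X [v Av ->] ->]] hz.
rewrite -/(G v) hh_spec in hz.
exact: span2_sub (Hac v) (Hac v) (line_span2 _ hz).
Qed.

Lemma strict_elt (X Y : E2 -> Prop) : subset_of X Y -> X <> Y -> exists2 x, Y x & ~ X x.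
Proof.
move=> hXY hn; apply: NNPP => N; apply: hn; apply: pred_ext => x; split; first exact: hXY.
by move=> hy; apply: NNPP => hx; apply: N; exists x.
Qed.

Lemma three : exists p q r, indep3 (hh p) (hh q) (hh r).
Proof.
apply: NNPP => N.
have [a [c Hac]] : exists a c, forall v, span2 a c (hh v).
  case: (classic (exists p, hh p != 0)) => [[p hp]|n0]; last first.
    exists 0, 0 => v.
    have -> : hh v = 0 by apply: NNPP => hv; apply: n0; exists v; apply/eqP.
    by exists 0, 0; rewrite scale0r addr0.
  case: (classic (exists q, ~ line (hh p) (hh q))) => [[q hq]|n1]; last first.
    exists (hh p), (hh p) => v; apply: line_span2; apply: NNPP => hl; apply: n1; by exists v.
  case: (classic (exists r, ~ span2 (hh p) (hh q) (hh r))) => [[r hr]|n2]; last first.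
    by exists (hh p), (hh q) => v; apply: NNPP => hs; apply: n2; exists v.
  exfalso; apply: N; exists p, q, r.
  exact: (notspan_indep3 hK2 (notline_indep2 hK2 hp hq) hr).
case: hlen => A0 [A1 [A2 [A3 H]]]; cbv zeta in H.
case: H => [[s01 n01] [s12 n12] [s23 n23]].
have [x1 h1 n1'] := strict_elt s01 n01.
have x1n0 : x1 != 0 by apply/eqP => e; apply: n1'; rewrite e; apply: closed0.
have [x2 h2 n2'] := strict_elt s12 n12.
have nl : ~ line x1 x2 by move=> hl; apply: n2'; apply: (closed_line hb2 h1).
have I12 := notline_indep2 hK2 x1n0 nl.
have [x3 h3 n3'] := strict_elt s23 n23.
have ns : ~ span2 x1 x2 x3 by move=> hs; apply: n3'; apply: (closed_span2 hb2 (s12 _ h1) h2).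
have I3 := notspan_indep3 hK2 I12 ns.
apply: (plane3 hK2 I3); apply: (image_in Hac (A := A3)).
- exact: s23 _ (s12 _ h1).
- exact: s23 _ h2.
- exact: h3.
Qed.

End Bridge.

Unset Implicit Arguments.

Theorem corollary8p4 (K1 K2 : unitRingType)
  (hK1 : division_ring K1) (hK2 : division_ring K2)
  (E1 : lmodType K1) (F1 : lmodType K1^c) (b1 : E1 -> F1 -> K1) (hb1 : dual_pair b1)
  (E2 : lmodType K2) (F2 : lmodType K2^c) (b2 : E2 -> F2 -> K2) (hb2 : dual_pair b2)
  (g : LF b1 -> LF b2)
  (hjoin : preserves_joins g)
  (hatom : forall A : LF b1, atom A -> atom (g A) \/ proj1_sig (g A) = zero_set (E:=E2))
  (hlen : image_length_ge3 g) :
  exists f : E1 -> E2, semilinear_map f /\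
    forall (v : E1) (A : LF b1), proj1_sig A = line v ->
      proj1_sig (g A) = line (f v).
Proof.
have [p [q [r H3]]] := three hK1 hK2 hb1 hb2 hjoin hatom hlen.
have [f [hsl hsim]] := core_thm hK2 (hH_br hK1 hK2 hb1 hb2 hjoin hatom) H3.
exists f; split => // v A eA.
rewrite (g_ext hjoin (B := L1 hK1 hb1 v) eA).
rewrite -/(G hK1 hb1 g v) (hh_spec hK1 hK2 hb1 hb2 hjoin hatom v).
exact: (sim_eq_line hK2 (hsim v)).
Qed.
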